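(* Let $\lambda\in(g,1)$ with $g=\frac{\sqrt5-1}{2}$, let $\ell\in\mathbb{N}$ satisfy $1<\lambda^2+\cdots+\lambda^\ell$, and let $\mathcal{U}$ and $\mathcal{U}_a$ be as in the context. There exists a constant $c$ with $0<c<\lambda^\ell|\mathcal{U}|/4$ such that for every $n\ge1$ and every $a\in\{0,1\}^{(n-1)\ell}$, if $J\subset\mathcal{U}_a$ is an interval with $|J|\le c\lambda^{n\ell}$, then there exist $a',a''\in\{0,1\}^{\ell-1}$ with $$J\subset\mathcal{U}_{aa'0}\cap\mathcal{U}_{aa''1}.$$
   Context: For a finite word $a=a_1\dots a_n$ over $\{0,1\}$, $\xi(a)=\sum_{j=1}^n a_j\lambda^j$. Let $\mathcal{U}=(\alpha,\beta)$ with $\alpha=\frac{\lambda^\ell}{1-\lambda^\ell}$ and $\beta=\frac{\lambda}{1-\lambda}-\frac{\lambda^\ell}{1-\lambda^\ell}$, and for $a\in\{0,1\}^n$ let $\mathcal{U}_a=\xi(a)+\lambda^n\mathcal{U}$. Juxtaposition $aa'0$ denotes concatenation of words. $|J|$ denotes the length of an interval $J$. *)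

(* Defs.v *)
From Stdlib Require Import Reals List.
Open Scope R_scope.

Definition gold : R := (sqrt 5 - 1) / 2.

Fixpoint xi_from (lam : R) (k : nat) (a : list bool) : R :=
  match a with
  | nil => 0
  | b :: t => (if b then lam ^ k else 0) + xi_from lam (S k) t
  end.

Definition xi (lam : R) (a : list bool) : R := xi_from lam 1 a.

Fixpoint pow_sum_from2 (lam : R) (l : nat) : R :=
  match l with
  | O => 0
  | S O => 0
  | S m => pow_sum_from2 lam m + lam ^ l
  end.

Definition alpha (lam : R) (l : nat) : R := lam ^ l / (1 - lam ^ l).
Definition beta (lam : R) (l : nat) : R := lam / (1 - lam) - lam ^ l / (1 - lam ^ l).

Definition U (lam : R) (l : nat) (x : R) : Prop := alpha lam l < x < beta lam l.

(* U_a = xi(a) + lam^n U, n = |a| *)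
Definition Ua (lam : R) (l : nat) (a : list bool) (x : R) : Prop :=
  xi lam a + lam ^ length a * alpha lam l < x < xi lam a + lam ^ length a * beta lam l.

Definition is_interval (J : R -> Prop) : Prop :=
  forall x y z, J x -> J z -> x <= y <= z -> J y.

(* |J| <= L, expressed as: the diameter sup J - inf J is at most L *)
Definition length_le (J : R -> Prop) (L : R) : Prop :=
  forall x y, J x -> J y -> y - x <= L.

Definition subset (A B : R -> Prop) : Prop := forall x, A x -> B x.

(* Main.v *)
Require Import Defs.
From Stdlib Require Import Reals List Lra Lia Psatz Classical.
Open Scope R_scope.

Lemma xi_from_app lam s a b :
  xi_from lam s (a ++ b) = xi_from lam s a + xi_from lam (s + length a) b.
Proof.
  revert s; induction a as [|h t IH]; intros s; simpl.
  - rewrite Nat.add_0_r; ring.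
  - rewrite IH. replace (S s + length t)%nat with (s + S (length t))%nat by lia. ring.
Qed.

Lemma xi_from_shift lam s m w :
  xi_from lam (s + m) w = lam ^ m * xi_from lam s w.
Proof.
  revert s; induction w as [|h t IH]; intros s; simpl.
  - ring.
  - replace (S (s + m)) with (S s + m)%nat by lia. rewrite IH.
    destruct h; rewrite ?pow_add; ring.
Qed.

Lemma xi_app3 lam a w (b : bool) :
  xi lam (a ++ w ++ b :: nil) =
  xi lam a + lam ^ length a * (xi lam w + (if b then lam ^ S (length w) else 0)).
Proof.
  unfold xi. rewrite xi_from_app, xi_from_app.
  replace (1 + length a)%nat with (1 + length a)%nat by reflexivity.
  rewrite xi_from_shift.
  replace (1 + length a + length w)%nat with (S (length w) + length a)%nat by lia.
  rewrite xi_from_shift. simpl. destruct b; ring.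
Qed.

Lemma pow_sum_closed lam k :
  (1 - lam) * pow_sum_from2 lam (S k) = lam ^ 2 * (1 - lam ^ k).
Proof.
  induction k as [|k IH].
  - simpl. ring.
  - change (pow_sum_from2 lam (S (S k))) with (pow_sum_from2 lam (S k) + lam ^ (S (S k))).
    rewrite Rmult_plus_distr_l, IH. simpl. ring.
Qed.

Lemma cover lam (Hl : 0 < lam < 1) k : forall p q d, 0 <= d -> 1 + d < q - p ->
  (1 - lam) * (q - p) <= lam ->
  forall J, is_interval J ->
  (forall x, J x -> lam ^ k * p < x < lam * (1 - lam ^ k) / (1 - lam) + lam ^ k * q) ->
  length_le J (lam ^ k * d) ->
  exists w, length w = k /\ forall x, J x -> xi lam w + lam ^ k * p < x < xi lam w + lam ^ k * q.
Proof.
  induction k as [|k IH]; intros p q d Hd Hpq Hpq2 J HJ HV HL.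
  - exists nil; split; [reflexivity|]. intros x Hx. specialize (HV x Hx). unfold xi; simpl in *.
    assert (lam * (1-1)/(1-lam) = 0) by (field; lra). lra.
  - assert (Hk : 0 < lam ^ k) by (apply pow_lt; lra).
    destruct (IH (lam * p) (lam + lam * q) (lam * d)) with (J := J) as [w' [Hw' Hin]].
    + nra.
    + nra.
    + nra.
    + exact HJ.
    + intros x Hx. specialize (HV x Hx). simpl in HV.
      assert (E: lam * (1 - lam * lam ^ k) / (1 - lam) + lam * lam ^ k * q =
                 lam * (1 - lam ^ k) / (1 - lam) + lam ^ k * (lam + lam * q)) by (field; lra).
      rewrite <- E. nra.
    + unfold length_le in *. intros x y Hx Hy. specialize (HL x y Hx Hy). simpl in HL. nra.
    + set (M := lam ^ S k). assert (HM : M = lam * lam ^ k) by reflexivity.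
      assert (HM0 : 0 < M) by nra.
      destruct (classic (exists x0, J x0 /\ x0 <= xi lam w' + M * (1 + p))) as [[x0 [Hx0 Hle]]|Hno].
      * exists (w' ++ false :: nil). split. { rewrite length_app; simpl; lia. }
        intros x Hx. unfold xi. rewrite xi_from_app. simpl. fold (xi lam w').
        specialize (Hin x Hx). specialize (HL x0 x Hx0 Hx).
        assert (M * (1 + p + d) < M * q) by (apply Rmult_lt_compat_l; lra).
        fold M in HL. split; nra.
      * exists (w' ++ true :: nil). split. { rewrite length_app; simpl; lia. }
        intros x Hx. unfold xi. rewrite xi_from_app. simpl. fold (xi lam w').
        rewrite Hw'. replace (lam * lam ^ k) with M by reflexivity.
        specialize (Hin x Hx).
        assert (x > xi lam w' + M * (1 + p)).
        { destruct (Rle_dec x (xi lam w' + M * (1 + p))); [exfalso; apply Hno; eauto|lra]. }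
        split; nra.
Qed.

Theorem corollary3p2 (lam : R) (l : nat) :
  gold < lam < 1 ->
  1 < pow_sum_from2 lam l ->
  exists c : R,
    0 < c < lam ^ l * (beta lam l - alpha lam l) / 4 /\
    forall (n : nat) (a : list bool),
      (1 <= n)%nat ->
      length a = ((n - 1) * l)%nat ->
      forall J : R -> Prop,
        is_interval J ->
        subset J (Ua lam l a) ->
        length_le J (c * lam ^ (n * l)) ->
        exists a' a'' : list bool,
          length a' = (l - 1)%nat /\ length a'' = (l - 1)%nat /\
          subset J (fun x => Ua lam l (a ++ a' ++ false :: nil) x /\
                             Ua lam l (a ++ a'' ++ true :: nil) x).
Proof.
  intros [Hg Hl1] HP.
  assert (Hl0 : 0 < lam).
  { unfold gold in Hg. assert (sqrt 1 < sqrt 5) by (apply sqrt_lt_1_alt; lra).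
    rewrite sqrt_1 in H. lra. }
  destruct l as [|k]. { simpl in HP; lra. }
  pose proof (pow_sum_closed lam k) as HPc.
  replace (S k - 1)%nat with k by lia.
  assert (Ht : 0 < lam ^ k) by (apply pow_lt; lra).
  set (t := lam ^ k) in *.
  assert (HSk : lam ^ S k = lam * t) by reflexivity.
  set (u := lam * t) in *.
  assert (Hu0 : 0 < u) by (unfold u; nra).
  assert (H1 : 1 - lam < lam ^ 2 * (1 - t)) by nra.
  assert (Hu1 : u < 2 * lam - 1) by (unfold u in *; nra).
  assert (Hal : alpha lam (S k) = u / (1 - u)) by (unfold alpha; rewrite HSk; reflexivity).
  assert (Hbe : beta lam (S k) = lam / (1 - lam) - u / (1 - u)) by (unfold beta; rewrite HSk; reflexivity).
  set (al := alpha lam (S k)) in *. set (be := beta lam (S k)) in *.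
  set (E := be - al).
  assert (HE : lam * E - 1 > 0).
  { assert (HD : (lam * E - 1) * ((1 - lam) * (1 - u)) =
      lam ^ 2 * (1 - u) - 2 * lam * u * (1 - lam) - (1 - lam) * (1 - u)).
    { unfold E; rewrite Hal, Hbe. field; lra. }
    assert (0 < (1 - lam) * (1 - u)) by nra.
    assert ((1 - lam) * (1 - u) < (lam ^ 2 - lam * u) * (1 - u)) by (unfold u in *; nra).
    assert (0 < lam * u * (2 * lam - 1 - u)) by (apply Rmult_lt_0_compat; [apply Rmult_lt_0_compat|]; lra).
    assert (0 < (lam * E - 1) * ((1 - lam) * (1 - u))) by (rewrite HD; lra).
    destruct (Rle_lt_dec (lam * E - 1) 0); [|lra]. exfalso. assert ((lam * E - 1) * ((1 - lam) * (1 - u)) <= 0 * ((1 - lam) * (1 - u))) by (apply Rmult_le_compat_r; lra). lra. }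
    
  assert (Hal0 : 0 <= al) by (rewrite Hal; apply Rlt_le, Rdiv_lt_0_compat; lra).
  assert (HE2 : (1 - lam) * (lam * E) <= lam).
  { assert (E = lam / (1 - lam) - 2 * al) by (unfold E; rewrite Hbe, Hal; ring).
    assert (HH : (1 - lam) * (lam * E) = lam * lam - 2 * (lam * (1 - lam)) * al) by (rewrite H; field; lra).
    rewrite HH. assert (0 <= lam * (1 - lam) * al) by (apply Rmult_le_pos; [apply Rmult_le_pos|]; lra). assert (lam * lam <= lam * 1) by (apply Rmult_le_compat_l; lra). lra. }
  assert (Hfix : (1 - u) * al = u) by (rewrite Hal; field; lra).
  assert (Hbe2 : be = lam * (1 - t) / (1 - lam) + u * be).
  { rewrite Hbe. unfold u. field. unfold u in Hu1. split; lra. }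
  set (d := (lam * E - 1) / 2).
  assert (Hd : 0 < d) by (unfold d; lra).
  assert (HuE : 0 < u * E) by nra.
  exists (Rmin d (u * E / 8)).
  assert (Hc0 : 0 < Rmin d (u * E / 8)) by (apply Rmin_glb_lt; lra).
  assert (Hcd : Rmin d (u * E / 8) <= d) by apply Rmin_l.
  assert (Hc8 : Rmin d (u * E / 8) <= u * E / 8) by apply Rmin_r.
  set (c := Rmin d (u * E / 8)) in *.
  split. { rewrite HSk. fold u. fold E. lra. }
  intros n a Hn Ha J HJ HJU HJL.
  set (m := length a) in *.
  assert (Hnl : (n * S k = m + S k)%nat) by (rewrite Ha; destruct n; [lia|]; simpl; lia).
  rewrite Hnl, pow_add, HSk in HJL. fold u in HJL.
  assert (Hm : 0 < lam ^ m) by (apply pow_lt; lra).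
  set (P := lam ^ m) in *.
  set (J' := fun y => J (xi lam a + P * y)).
  assert (Hgen : forall p q, q - p = lam * E -> t * p <= al ->
            be <= lam * (1 - t) / (1 - lam) + t * q ->
            exists w, length w = k /\ forall x, J x ->
              xi lam a + P * (xi lam w + t * p) < x < xi lam a + P * (xi lam w + t * q)).
  { intros p q Hpq Hp Hq.
    destruct (cover lam (conj Hl0 Hl1) k p q d) with (J := J') as [w [Hw Hin]].
    - lra.
    - unfold d; lra.
    - rewrite Hpq; exact HE2.
    - intros y1 y2 y3 Hy1 Hy3 Hy. unfold J' in *. apply (HJ _ _ _ Hy1 Hy3). nra.
    - intros y Hy. unfold J' in Hy. fold t. specialize (HJU _ Hy). unfold Ua in HJU.
      fold m in HJU. fold P in HJU. change (alpha lam (S k)) with al in HJU. change (beta lam (S k)) with be in HJU.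
      assert (al < y < be).
      { destruct HJU as [A B]. split.
        - apply (Rmult_lt_reg_l P); lra.
        - apply (Rmult_lt_reg_l P); lra. }
      lra.
    - intros y1 y2 Hy1 Hy2. unfold J' in *. specialize (HJL _ _ Hy1 Hy2).
      fold t. assert (P * (y2 - y1) <= P * (t * d)).
      { assert (c * (P * u) <= P * (t * d)).
        { unfold u. assert (c * lam <= d) by nra. replace (c * (P * (lam * t))) with ((P * t) * (c * lam)) by ring. replace (P * (t * d)) with ((P * t) * d) by ring. apply Rmult_le_compat_l; [apply Rmult_le_pos|]; lra. }
        nra. }
      apply (Rmult_le_reg_l P); lra.
    - exists w; split; [exact Hw|]. intros x Hx.
      assert (J' ((x - xi lam a) / P)).
      { unfold J'. replace (xi lam a + P * ((x - xi lam a) / P)) with x by (field; lra). exact Hx. }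
      specialize (Hin _ H). fold t in Hin.
      assert (x = xi lam a + P * ((x - xi lam a) / P)) by (field; lra).
      destruct Hin as [A B]. set (y := (x - xi lam a) / P) in *. split.
      + assert (xi lam a + P * (xi lam w + t * p) < xi lam a + P * y) by (apply Rplus_lt_compat_l, Rmult_lt_compat_l; lra). lra.
      + assert (xi lam a + P * y < xi lam a + P * (xi lam w + t * q)) by (apply Rplus_lt_compat_l, Rmult_lt_compat_l; lra). lra. }
  destruct (Hgen (lam * al) (lam * be)) as [w0 [Hw0 H0]].
  { unfold E; ring. }
  { replace (t * (lam * al)) with (u * al) by (unfold u; ring). nra. }
  { replace (t * (lam * be)) with (u * be) by (unfold u; ring). lra. }
  destruct (Hgen (lam * (al + 1)) (lam * (be + 1))) as [w1 [Hw1 H1']].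
  { unfold E; ring. }
  { replace (t * (lam * (al + 1))) with (u * al + u) by (unfold u; ring). nra. }
  { replace (t * (lam * (be + 1))) with (u * be + u) by (unfold u; ring). lra. }
  exists w0, w1. split; [exact Hw0|]. split; [exact Hw1|].
  intros x Hx. specialize (H0 x Hx). specialize (H1' x Hx).
  unfold Ua. rewrite !xi_app3. rewrite !length_app. simpl length.
  rewrite Hw0, Hw1. fold m. fold P.
  replace (m + (k + 1))%nat with (m + S k)%nat by lia.
  rewrite pow_add, HSk. fold P.
  change (alpha lam (S k)) with al. change (beta lam (S k)) with be.
  assert (e1 : t * (lam * al) = u * al) by (unfold u; ring).
  assert (e2 : t * (lam * be) = u * be) by (unfold u; ring).
  assert (e3 : t * (lam * (al + 1)) = u + u * al) by (unfold u; ring).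
  assert (e4 : t * (lam * (be + 1)) = u + u * be) by (unfold u; ring).
  rewrite e1, e2 in H0. rewrite e3, e4 in H1'.
  assert (f1 : xi lam a + P * (xi lam w0 + 0) + P * u * al = xi lam a + P * (xi lam w0 + u * al)) by ring.
  assert (f2 : xi lam a + P * (xi lam w0 + 0) + P * u * be = xi lam a + P * (xi lam w0 + u * be)) by ring.
  assert (f3 : xi lam a + P * (xi lam w1 + u) + P * u * al = xi lam a + P * (xi lam w1 + (u + u * al))) by ring.
  assert (f4 : xi lam a + P * (xi lam w1 + u) + P * u * be = xi lam a + P * (xi lam w1 + (u + u * be))) by ring.
  rewrite f1, f2, f3, f4. tauto.
Qed.
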